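(* Let $a_{n,0}$ denote the number of matchings of size $n$ with no occurrence of the endhered pattern $21$. For any $n\ge0$, $$a_{n+1,0}=\sum_{k=0}^{n}(-1)^{n-k}\binom{n}{k}(2k+1)!!,$$ where $m!!$ is the double factorial ($m(m-2)(m-4)\cdots$ down to $2$ or $1$).
   Context: A matching of size $n$ is a set of $n$ arcs $(a,b)$ with $1\le a<b\le 2n$ such that each point of $\{1,\dots,2n\}$ belongs to exactly one arc. An occurrence of the endhered pattern $21$ in a matching $\mu$ is a pair of arcs of $\mu$ of the form $(i+1,j+2),(i+2,j+1)$ (two nested arcs with consecutive starting points and consecutive ending points). *)

(* Defs.v *)
From mathcomp Require Import all_boot all_order all_algebra.
Set Implicit Arguments. Unset Strict Implicit. Unset Printing Implicit Defensive.

(* Points {1,...,2n} are represented 0-indexed by 'I_(2n); an arc (a,b)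
   is a pair of points.  A matching of size n is a set of arcs with a < b
   such that every point belongs to exactly one arc. *)
Definition arc n := ('I_(2 * n) * 'I_(2 * n))%type.

Definition is_matching n (M : {set arc n}) : bool :=
  [forall e in M, (val e.1 < val e.2)%N] &&
  [forall k : 'I_(2 * n), #|[set e in M | (e.1 == k) || (e.2 == k)]| == 1%N].

(* Occurrence of the endhered pattern 21: two arcs (i+1, j+2), (i+2, j+1). *)
Definition has_endhered21 n (M : {set arc n}) : bool :=
  [exists x in M, exists y in M,
     (val y.1 == (val x.1).+1) && (val x.2 == (val y.2).+1)].

Definition a0 n : nat :=
  #|[set M : {set arc n} | is_matching M && ~~ has_endhered21 M]|.

Fixpoint dfact (m : nat) : nat :=
  match m with
  | 0 => 1
  | 1 => 1
  | (k.+2) as m' => m' * dfact k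
  end.

(* Main.v *)
Require Import Defs.
From mathcomp Require Import all_boot all_order all_algebra.
From mathcomp Require Import zify ring.
Set Implicit Arguments. Unset Strict Implicit. Unset Printing Implicit Defensive.


Definition sh (u v x : nat) : nat :=
  if x < u then x else if x.+1 < v then x.+1 else x.+2.
Definition ush (u v y : nat) : nat :=
  if y < u then y else if y < v then y.-1 else y - 2.

Ltac split_if1 := match goal with |- context [if ?b then _ else _] =>
  lazymatch b with context [if _ then _ else _] => fail | _ =>
   let E := fresh "E" in case E: b; rewrite ?E end end.
Ltac split_ifs := repeat split_if1.
Ltac shcase := rewrite /sh /ush; split_ifs; try lia.

Section ShLemmas.
Variables u v : nat.
Hypothesis uv : u < v.
Lemma sh_neu x : sh u v x != u. Proof. shcase. Qed.
Lemma sh_nev x : sh u v x != v. Proof. shcase. Qed.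
Lemma ushK x : ush u v (sh u v x) = x. Proof. shcase. Qed.
Lemma shK y : y != u -> y != v -> sh u v (ush u v y) = y. Proof. move=> /eqP ? /eqP ?; shcase. Qed.
Lemma sh_lt x y : (sh u v x < sh u v y) = (x < y). Proof. shcase. Qed.
Lemma sh_inj : injective (sh u v).
Proof. move=> x y e. have h1 := sh_lt x y. have h2 := sh_lt y x. rewrite e ltnn in h1 h2. lia. Qed.
Lemma sh_bound m x : v < m.+2 -> (sh u v x < m.+2) = (x < m). Proof. move=> ?; shcase. Qed.
Lemma ush_bound m y : v < m.+2 -> y < m.+2 -> y != u -> y != v -> ush u v y < m.
Proof. move=> ? ? /eqP ? /eqP ?; shcase. Qed.
End ShLemmas.

Definition isfpf m (F : nat -> nat) :=
  forall x, x < m -> [/\ F x < m, F (F x) = x & F x <> x].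

Definition insF (u v : nat) (G : nat -> nat) (y : nat) : nat :=
  if y == u then v else if y == v then u else sh u v (G (ush u v y)).
Definition delF (u : nat) (F : nat -> nat) (x : nat) : nat :=
  ush u (F u) (F (sh u (F u) x)).

Section InsDel.
Variable m : nat.

Lemma insF_sh u v G x : u < v -> insF u v G (sh u v x) = sh u v (G x).
Proof. move=> uv; rewrite /insF (negbTE (sh_neu uv x)) (negbTE (sh_nev uv x)) ushK //. Qed.
Lemma insF_u u v G : insF u v G u = v. Proof. by rewrite /insF eqxx. Qed.
Lemma insF_v u v G : u < v -> insF u v G v = u.
Proof. move=> uv; rewrite /insF eqxx; case: eqP => //; lia. Qed.

Lemma ins_fpf u v G : u < v -> v < m.+2 -> isfpf m G -> isfpf m.+2 (insF u v G).
Proof.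
move=> uv vm hG y ym.
case: (eqVneq y u) => [->|yu]; first by rewrite insF_u insF_v //; split; lia.
case: (eqVneq y v) => [->|yv]; first by rewrite insF_v // insF_u; split; lia.
rewrite -(shK uv yu yv) !insF_sh //.
have := ush_bound uv vm ym yu yv; set x := ush u v y => xm.
have [h1 h2 h3] := hG x xm.
split; first by rewrite sh_bound.
  by rewrite h2.
by move=> /(sh_inj uv).
Qed.

Lemma del_fpf u F : u < m.+2 -> u < F u -> isfpf m.+2 F -> isfpf m (delF u F).
Proof.
move=> um uv hF x xm; rewrite /delF.
set v := F u.
have [v1 v2 v3] := hF u um.
have shm : sh u v x < m.+2 by rewrite sh_bound.
have [w1 w2 w3] := hF _ shm.
have Fu : F (sh u v x) != u.
  apply/eqP => e; move: (sh_nev uv x); by rewrite -w2 e eqxx.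
have Fv : F (sh u v x) != v.
  apply/eqP => e; move: (sh_neu uv x); by rewrite -w2 e v2 eqxx.
split.
- by apply: (ush_bound uv)...
- by rewrite shK // w2 ushK.
- move=> e; apply: w3; by rewrite -{2}e shK.
Qed.

Lemma del_ins u v G x : u < v -> delF u (insF u v G) x = G x.
Proof. move=> uv; by rewrite /delF insF_u insF_sh // ushK. Qed.

Lemma ins_del u F y : u < m.+2 -> u < F u -> isfpf m.+2 F -> y < m.+2 ->
  insF u (F u) (delF u F) y = F y.
Proof.
move=> um uv hF ym.
have [v1 v2 v3] := hF u um.
case: (eqVneq y u) => [->|yu]; first by rewrite insF_u.
case: (eqVneq y (F u)) => [->|yv]; first by rewrite insF_v // v2.
rewrite -(shK uv yu yv) insF_sh // /delF.
set x := ush u (F u) y.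
have shm : sh u (F u) x < m.+2 by rewrite /x shK.
have [w1 w2 w3] := hF _ shm.
rewrite shK //.
  apply/eqP => e; move: (sh_nev uv x); by rewrite -w2 e eqxx.
apply/eqP => e; move: (sh_neu uv x); by rewrite -w2 e v2 eqxx.
Qed.
End InsDel.
Definition isocc k (F : nat -> nat) i : bool :=
  [&& i.+1 < k, i.+1 < F i.+1 & F i == (F i.+1).+1].
Definition occN k F := \sum_(0 <= i < k) (isocc k F i : nat).

Section Occ.
Variables u v : nat.
Hypothesis uv : u < v.
Lemma sh_small x : x < u -> sh u v x = x. Proof. rewrite /sh => ->. done. Qed.
Lemma shS x : (sh u v x).+1 != u -> (sh u v x).+1 != v -> sh u v x.+1 = (sh u v x).+1.
Proof. rewrite /sh; split_ifs; move=> /eqP ? /eqP ?; lia. Qed.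
Lemma sh_succ_inv y z : sh u v z = (sh u v y).+1 -> z = y.+1.
Proof.
move=> e. have h1 := sh_lt uv y z. have h2 := sh_lt uv z y.+2.
have h3 := sh_lt uv y y.+1. have h4 := sh_lt uv y.+1 y.+2.
rewrite e in h1 h2. lia.
Qed.

Lemma sh_vpred y : sh u v y = v.-1 -> y.+1 = v.-1.
Proof. rewrite /sh; split_ifs; lia. Qed.

Lemma sum_sh m (phi : nat -> nat) : v < m.+2 ->
  \sum_(0 <= i < m.+2) phi i = phi u + phi v + \sum_(0 <= x < m) phi (sh u v x).
Proof.
move=> vm.
have h1 : u <= m.+2 by lia.
have h2 : u.+1 <= m.+2 by lia.
have h3 : v <= m.+2 by lia.
have h4 : v.+1 <= m.+2 by lia.
have h5 : u <= m by lia.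
have h6 : v.-1 <= m by lia.
have h7 : u <= v.-1 by lia.
rewrite (big_cat_nat (n := u) (leq0n u) h1) /=.
rewrite (big_cat_nat (n := u.+1) (leqnSn u) h2) /=.
rewrite (big_cat_nat (n := v) uv h3) /=.
rewrite (big_cat_nat (n := v.+1) (leqnSn v) h4) /=.
rewrite !big_nat1.
rewrite [in RHS](big_cat_nat (n := u) (leq0n u) h5) /=.
rewrite [in RHS](big_cat_nat (n := v.-1) h7 h6) /=.
have e1 : \sum_(0 <= x < u) phi (sh u v x) = \sum_(0 <= i < u) phi i.
  apply: eq_big_nat => x /andP [_ xu]; by rewrite sh_small.
have e2 : \sum_(u <= x < v.-1) phi (sh u v x) = \sum_(u.+1 <= i < v) phi i.
  rewrite -addn1 big_addn.
  have -> : v - 1 = v.-1 by lia.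
  apply: eq_big_nat => x /andP [ux xv]; rewrite addn1 /sh.
  have -> : (x < u) = false by lia.
  by have -> : (x.+1 < v) = true by lia.
have e3 : \sum_(v.-1 <= x < m) phi (sh u v x) = \sum_(v.+1 <= i < m.+2) phi i.
  have -> : v.+1 = v.-1 + 2 by lia.
  rewrite big_addn.
  have -> : m.+2 - 2 = m by lia.
  apply: eq_big_nat => x /andP [ux xv]; rewrite /sh.
  have -> : (x < u) = false by lia.
  have -> : (x.+1 < v) = false by lia.
  by rewrite addn2.
rewrite e1 e2 e3; lia.
Qed.
End Occ.

Lemma occ_ins_a m G a : isfpf m G -> a < m -> a < G a ->
  isocc m.+2 (insF a.+1 (G a).+1 G) a.
Proof.
move=> hG am ab.
set b := G a. set u := a.+1. set v := b.+1. set H := insF u v G.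
have uv : u < v by rewrite /u /v; lia.
have [bm Gb _] := hG a am.
have Hsh x : H (sh u v x) = sh u v (G x) by rewrite /H insF_sh.
have Hu : H u = v by rewrite /H insF_u.
rewrite /isocc -/u Hu.
have -> : H a = sh u v (G a) by rewrite -Hsh sh_small // /u.
rewrite -/b /sh.
have -> : (b < u) = false by rewrite /u; lia.
have -> : (b.+1 < v) = false by rewrite /v; lia.
apply/and3P; split; rewrite /u /v; lia.
Qed.

Lemma occ_ins m G a : isfpf m G -> a < m -> a < G a ->
  occN m.+2 (insF a.+1 (G a).+1 G) = (occN m G).+1.
Proof.
move=> hG am ab.
set b := G a. set u := a.+1. set v := b.+1. set H := insF u v G.
have uv : u < v by rewrite /u /v; lia.
have [bm Gb _] := hG a am.
rewrite -/b in bm Gb.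
have vm : v < m.+2 by rewrite /v; lia.
have Hsh x : H (sh u v x) = sh u v (G x) by rewrite /H insF_sh.
have Hu : H u = v by rewrite /H insF_u.
have Hv : H v = u by rewrite /H insF_v.
have p1 : isocc m.+2 H a.
  rewrite /isocc -/u Hu.
  have -> : H a = sh u v (G a) by rewrite -Hsh sh_small // /u.
  rewrite -/b /sh.
  have -> : (b < u) = false by rewrite /u; lia.
  have -> : (b.+1 < v) = false by rewrite /v; lia.
  apply/and3P; split; rewrite /u /v; lia.
have p3 : isocc m.+2 H v = false.
  rewrite /isocc Hv; apply/negP => /and3P [_ h1 /eqP h2]; rewrite /u in h2; lia.
have p2 : isocc m.+2 H u = isocc m G a.
  rewrite /isocc Hu -/b -/u.
  case: (eqVneq b u) => [bu|bu].
    have -> : u.+1 = v by rewrite /v bu.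
    rewrite Hv; apply/idP/idP => /and3P [h1 h2 /eqP h3]; rewrite /v /u /b in bu h1 h2 h3; lia.
  have e : u.+1 = sh u v u.
    rewrite /sh /u /v ltnn; have -> : (a.+2 < b.+1) = true by rewrite /u in bu; lia. done.
  have eb : b = sh u v b.-1.
    rewrite /sh /u /v; have -> : (b.-1 < a.+1) = false by rewrite /u in bu; lia.
    have -> : (b.-1.+1 < b.+1) = true by lia. lia.
  have hab : a < b by [].
  have key : (v == (sh u v (G u)).+1) = (b == (G u).+1).
    apply/eqP/eqP => h.
    - have h' : sh u v b.-1 = sh u v (G u) by rewrite -eb; exact: succn_inj h.
      have := sh_inj uv h'. lia.
    - have h' : G u = b.-1 by lia.
      by rewrite h' -eb.
  rewrite [in LHS]e Hsh (sh_lt uv) (sh_bound uv _ vm) key.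
  done.
have hab : a < b by [].
have sha : sh u v a = a by apply: sh_small; rewrite /u.
have p4 : forall x, x < m -> x != a -> isocc m.+2 H (sh u v x) = isocc m G x.
  move=> x xm xa.
  have [x1 x2 x3] := hG x xm.
  have hxa : sh u v x <> a.
    move=> e. have : sh u v x = sh u v a by rewrite sha.
    move/(sh_inj uv) => ex; by rewrite ex eqxx in xa.
  rewrite /isocc Hsh.
  case: (eqVneq (sh u v x).+1 v) => [e|ne].
  - have s_b : sh u v x = b by move/succn_inj: e.
    have bx : x.+1 = b by move: (sh_vpred uv (y:=x)); rewrite s_b; move=> /(_ erefl).
    rewrite e Hv bx Gb.
    have -> : (v < u) = false by rewrite /v /u; lia.
    have -> : (b < a) = false by lia.
    by rewrite !andbF.
  have nu : (sh u v x).+1 != u.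
    apply/eqP => e; apply: hxa; exact: succn_inj e.
  rewrite -(shS uv nu ne) Hsh (sh_lt uv) (sh_bound uv _ vm).
  case h1 : (x.+1 < m) => //=. case h2 : (x.+1 < G x.+1) => //=.
  have [y1 y2 y3] := hG _ h1.
  apply/eqP/eqP => e.
  + exact: (sh_succ_inv uv e).
  + rewrite e shS //.
    * apply/eqP => e2.
      have ya : G x.+1 = a.
        apply: (sh_inj uv); rewrite sha; exact: succn_inj e2.
      have xb : x.+1 = b by rewrite -y2 ya.
      apply/negP: ne; apply/negPn/eqP; rewrite /v -xb; congr S.
      rewrite /sh. have -> : (x < u) = false by rewrite /u; move/eqP: xa; rewrite /b in xb hab; lia.
      by rewrite ltnSn.
    * apply/eqP => e2.
      have s_b : sh u v (G x.+1) = b by move/succn_inj: e2.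
      have e3 : (G x.+1).+1 = b by move: (sh_vpred uv (y:=G x.+1)); rewrite s_b; move=> /(_ erefl).
      have Gxb : G x = b by rewrite e e3.
      by move: xa; rewrite -x2 Gxb Gb eqxx.
have -> : occN m.+2 H = isocc m.+2 H u + isocc m.+2 H v + \sum_(0 <= x < m) (isocc m.+2 H (sh u v x) : nat).
  by rewrite /occN (sum_sh uv _ vm).
rewrite p2 p3 /occN.
have h1 : a <= m by lia.
rewrite (big_cat_nat (n := a) (leq0n a) h1) /= (big_ltn am).
rewrite [in RHS](big_cat_nat (n := a) (leq0n a) h1) /= (big_ltn am).
rewrite sh_small ?p1 /u //.
have -> : \sum_(0 <= i < a) (isocc m.+2 H (sh u v i) : nat) = \sum_(0 <= i < a) (isocc m G i : nat).
  apply: eq_big_nat => x /andP [_ xa]; rewrite p4 //; lia.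
have -> : \sum_(a.+1 <= i < m) (isocc m.+2 H (sh u v i) : nat) = \sum_(a.+1 <= i < m) (isocc m G i : nat).
  apply: eq_big_nat => x /andP [xa xm]; rewrite p4 //; lia.
lia.
Qed.
Definition fn m (f : {ffun 'I_m -> 'I_m}) (x : nat) : nat :=
  if (insub x : option 'I_m) is Some i then val (f i) else x.
Lemma fnE m (f : {ffun 'I_m -> 'I_m}) (i : 'I_m) : fn f i = f i.
Proof. by rewrite /fn valK. Qed.
Lemma fn_out m (f : {ffun 'I_m -> 'I_m}) x : m <= x -> fn f x = x.
Proof. move=> h; by rewrite /fn insubN // -leqNgt. Qed.
Lemma fn_lt m (f : {ffun 'I_m -> 'I_m}) x : x < m -> fn f x < m.
Proof. move=> h; have -> : x = Ordinal h by []. by rewrite fnE. Qed.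

Definition mk m (F : nat -> nat) : {ffun 'I_m -> 'I_m} := [ffun i : 'I_m => insubd i (F i)].
Lemma fn_mk m F x : x < m -> F x < m -> fn (mk m F) x = F x.
Proof. move=> h1 h2; have -> : x = Ordinal h1 by []. by rewrite fnE ffunE insubdK. Qed.

Lemma ffun_ext m (f g : {ffun 'I_m -> 'I_m}) : (forall x, x < m -> fn f x = fn g x) -> f = g.
Proof. move=> h; apply/ffunP => i; apply/val_inj; have := h i (ltn_ord i); by rewrite !fnE. Qed.

Definition fpf m (f : {ffun 'I_m -> 'I_m}) : bool := [forall i, (f (f i) == i) && (f i != i)].

Lemma fpfP m (f : {ffun 'I_m -> 'I_m}) : reflect (isfpf m (fn f)) (fpf f).
Proof.
apply: (iffP forallP) => h.
- move=> x xm. have -> : x = Ordinal xm by [].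
  have /andP [/eqP h1 h2] := h (Ordinal xm).
  rewrite !fnE h1; split => //. by move=> /ord_inj e; move: h2; rewrite e eqxx.
- move=> i. have [h1 h2 h3] := h i (ltn_ord i).
  rewrite !fnE in h1 h2 h3. apply/andP; split.
  + by rewrite -val_eqE /= h2.
  + by apply/negP => /eqP e; apply: h3; rewrite e.
Qed.

Lemma isfpf_ext m F G : (forall x, x < m -> F x = G x) -> isfpf m F -> isfpf m G.
Proof.
move=> e h x xm; have [h1 h2 h3] := h x xm.
rewrite -!e //; split => //.
Qed.

Lemma mkE m F x : isfpf m F -> x < m -> fn (mk m F) x = F x.
Proof. move=> h xm; have [h1 _ _] := h x xm; exact: fn_mk. Qed.

Lemma fpf_mk m F : isfpf m F -> fpf (mk m F).
Proof. move=> h; apply/fpfP; apply: (isfpf_ext _ h) => x xm; by rewrite mkE. Qed.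

Lemma isocc_ext k F G i : (forall x, x < k -> F x = G x) -> isocc k F i = isocc k G i.
Proof.
move=> e; rewrite /isocc; case h: (i.+1 < k) => //=.
rewrite !e //; lia.
Qed.

Lemma occ_ext k F G : (forall x, x < k -> F x = G x) -> occN k F = occN k G.
Proof. move=> e; apply: eq_bigr => i _; by rewrite (isocc_ext _ e). Qed.

Lemma insF_ext m u v G1 G2 y : u < v -> v < m.+2 -> (forall x, x < m -> G1 x = G2 x) ->
  y < m.+2 -> insF u v G1 y = insF u v G2 y.
Proof.
move=> uv vm e ym; rewrite /insF.
case: eqP => // /eqP yu; case: eqP => // /eqP yv.
by rewrite e // (ush_bound uv vm).
Qed.

Lemma delF_ext m u F1 F2 x : u < m.+2 -> (forall y, y < m.+2 -> F1 y = F2 y) ->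
  u < F1 u -> F1 u < m.+2 -> x < m -> delF u F1 x = delF u F2 x.
Proof.
move=> um e uv vm xm; have e1 : F1 u = F2 u by apply: e.
rewrite /delF -e1 (e (sh u (F1 u) x)) //. by rewrite (sh_bound uv _ vm).
Qed.

Section FF.
Variable m : nat.
Definition delf u (f : {ffun 'I_m.+2 -> 'I_m.+2}) : {ffun 'I_m -> 'I_m} := mk m (delF u (fn f)).
Definition insf u v (g : {ffun 'I_m -> 'I_m}) : {ffun 'I_m.+2 -> 'I_m.+2} := mk m.+2 (insF u v (fn g)).

Lemma insfE u v g y : u < v -> v < m.+2 -> fpf g -> y < m.+2 -> fn (insf u v g) y = insF u v (fn g) y.
Proof. move=> uv vm /fpfP h ym; rewrite mkE //; exact: ins_fpf. Qed.
Lemma fpf_insf u v g : u < v -> v < m.+2 -> fpf g -> fpf (insf u v g).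
Proof. move=> uv vm /fpfP h; apply: fpf_mk; exact: ins_fpf. Qed.
Lemma delfE u f x : u < m.+2 -> u < fn f u -> fpf f -> x < m -> fn (delf u f) x = delF u (fn f) x.
Proof. move=> um uv /fpfP h xm; rewrite mkE //; exact: del_fpf. Qed.
Lemma fpf_delf u f : u < m.+2 -> u < fn f u -> fpf f -> fpf (delf u f).
Proof. move=> um uv /fpfP h; apply: fpf_mk; exact: del_fpf. Qed.

Lemma delf_insf u v g : u < v -> v < m.+2 -> fpf g -> delf u (insf u v g) = g.
Proof.
move=> uv vm hg; apply: ffun_ext => x xm.
have um : u < m.+2 by lia.
have e1 : fn (insf u v g) u = v by rewrite insfE // insF_u.
rewrite delfE //; last (by apply: fpf_insf); last by rewrite e1.
rewrite (delF_ext (F2 := insF u v (fn g)) um) //.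
- by rewrite del_ins.
- move=> y ym; by rewrite insfE.
- by rewrite e1.
- by rewrite e1.
Qed.

Lemma insf_delf u f : u < m.+2 -> u < fn f u -> fpf f -> insf u (fn f u) (delf u f) = f.
Proof.
move=> um uv hf; apply: ffun_ext => y ym.
have vm : fn f u < m.+2 by apply: fn_lt.
rewrite insfE //; last by apply: fpf_delf.
rewrite (insF_ext (m := m) (G2 := delF u (fn f))) //.
- move/fpfP: hf => hf. by rewrite (ins_del (m := m)).
- move=> x xm; by rewrite delfE.
Qed.

Definition occf k (f : {ffun 'I_k -> 'I_k}) := occN k (fn f).

Lemma occ_insf g a : fpf g -> a < m -> a < fn g a ->
  occf (insf a.+1 (fn g a).+1 g) = (occf g).+1.
Proof.
move=> hg am ab.
have vm : (fn g a).+1 < m.+2 by have := fn_lt g am; lia.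
rewrite /occf -(occ_ins _ am ab); last by apply/fpfP.
apply: occ_ext => y ym; rewrite insfE //; lia.
Qed.

Lemma isocc_insf g a : fpf g -> a < m -> a < fn g a ->
  isocc m.+2 (fn (insf a.+1 (fn g a).+1 g)) a.
Proof.
move=> hg am ab.
have vm : (fn g a).+1 < m.+2 by have := fn_lt g am; lia.
rewrite (isocc_ext (G := insF a.+1 (fn g a).+1 (fn g))).
  apply: occ_ins_a => //; by apply/fpfP.
move=> y ym; rewrite insfE //; lia.
Qed.
End FF.
Lemma card_bij (T U : finType) (A : {set T}) (B : {set U}) (f : T -> U) (g : U -> T) :
  {in A, forall x, f x \in B} -> {in B, forall y, g y \in A} ->
  {in A, cancel f g} -> {in B, cancel g f} -> #|A| = #|B|.
Proof.
move=> fAB gBA fK gK.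
rewrite -(card_in_imset (f := f) (D := A)); last first.
  move=> x y xA yA e; by rewrite -(fK x xA) e fK.
suff -> : [set f x | x in A] = B by [].
apply/setP => y; apply/imsetP/idP.
- by case=> x xA ->; apply: fAB.
- move=> yB; exists (g y); [exact: gBA | by rewrite gK].
Qed.

Lemma card_pairs (T U : finType) (Q : pred T) (R : T -> pred U) :
  #|[set p : T * U | Q p.1 && R p.1 p.2]| = \sum_(x | Q x) #|[set y | R x y]|.
Proof.
rewrite -sum1_card (eq_bigl (fun p : T * U => Q p.1 && R p.1 p.2)); last by move=> p; rewrite inE.
rewrite -(pair_big_dep Q R (fun _ _ => 1)).
apply: eq_bigr => x _; rewrite -sum1_card; apply: eq_bigl => y; by rewrite inE.
Qed.

Lemma card_set_sum k (b : nat -> bool) :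
  #|[set i : 'I_k | b i]| = \sum_(0 <= i < k) (b i : nat).
Proof.
rewrite -sum1_card big_mkord big_mkcond /=; apply: eq_bigr => i _; rewrite inE.
by case: (b i).
Qed.

Lemma openers m (g : {ffun 'I_m -> 'I_m}) : fpf g ->
  (\sum_(0 <= a < m) (a < fn g a : nat)).*2 = m.
Proof.
move=> hg; have hg' := hg; move/forallP: hg' => hg'.
have ginj : injective g.
  apply: (can_inj (g := g)) => i; by have /andP [/eqP -> _] := hg' i.
rewrite big_mkord.
have e1 : \sum_(i < m) (i < fn g i : nat) = \sum_(i < m) (g i < i : nat).
  rewrite (reindex_inj ginj) /=; apply: eq_bigr => i _.
  have /andP [/eqP h _] := hg' i. by rewrite !fnE h.
rewrite -addnn {2}e1 -big_split /=.
rewrite -[RHS]card_ord -sum1_card; apply: eq_bigr => i _.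
have /andP [_ h] := hg' i. rewrite fnE.
have : (g i : nat) != i by rewrite val_eqE.
move: (g i : nat) => y; case: (ltngtP i y) => //.
Qed.

Definition Fset m := [set f : {ffun 'I_m -> 'I_m} | fpf f].
Definition Pset m t := [set f : {ffun 'I_m -> 'I_m} | fpf f && (occf f == t)].

Lemma Fset_rec m : #|Fset m.+2| = m.+1 * #|Fset m|.
Proof.
have -> : m.+1 * #|Fset m| = #|setX [set: 'I_m.+1] (Fset m)| by rewrite cardsX cardsT card_ord.
apply: (card_bij (f := fun f : {ffun 'I_m.+2 -> 'I_m.+2} =>
          ((inord (fn f 0).-1 : 'I_m.+1), delf 0 f))
                 (g := fun p : 'I_m.+1 * {ffun 'I_m -> 'I_m} => insf 0 (p.1).+1 p.2)).
- move=> f; rewrite !inE /= => hf.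
  move/fpfP: (hf) => hF; have [h1 _ h3] := hF 0 isT.  
  apply: fpf_delf => //; lia.
- case=> j g; rewrite !inE /= => hg.
  apply: fpf_insf => //. have := ltn_ord j; lia.
- move=> f; rewrite !inE /= => hf.
  move/fpfP: (hf) => hF; have [h1 _ h3] := hF 0 isT.
  rewrite inordK; last lia.
  have -> : (fn f 0).-1.+1 = fn f 0 by lia.
  apply: insf_delf => //; lia.
- case=> j g; rewrite !inE /= => hg.
  have jm : j.+1 < m.+2 by have := ltn_ord j; lia.
  rewrite delf_insf //. rewrite insfE // insF_u /=. by rewrite inord_val.
Qed.

Lemma occf_le k (f : {ffun 'I_k -> 'I_k}) : occf f <= k.
Proof.
rewrite /occf /occN; apply: (@leq_trans (\sum_(0 <= i < k) 1)).
  by apply: leq_sum => i _; case: (isocc _ _ _).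
by rewrite sum_nat_const_nat subn0 muln1.
Qed.

Lemma Fset_sum m : #|Fset m| = \sum_(t < m.+1) #|Pset m t|.
Proof.
rewrite -sum1_card.
have e : forall f : {ffun 'I_m -> 'I_m}, 1 = \sum_(t < m.+1) (occf f == t : nat).
  move=> f; have hc : occf f < m.+1 by rewrite ltnS occf_le.
  rewrite (bigD1 (Ordinal hc)) //= eqxx big1 //.
  move=> j /negP hj; case: eqP => // e; case: hj; apply/eqP/val_inj => /=; by rewrite e.
transitivity (\sum_(f in Fset m) \sum_(t < m.+1) (occf f == t : nat)).
  by apply: eq_bigr => f _; exact: e.
rewrite exchange_big /=.
apply: eq_bigr => t _; rewrite -sum1_card big_mkcond [RHS]big_mkcond /=.
apply: eq_bigr => f _; rewrite !inE; by case: (fpf f); case: (occf f == t).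
Qed.

Lemma del_key m (f : {ffun 'I_m.+2 -> 'I_m.+2}) (i : nat) : fpf f -> isocc m.+2 (fn f) i ->
  [/\ i < m, i.+1 < fn f i.+1, fn (delf i.+1 f) i = (fn f i.+1).-1 & i < (fn f i.+1).-1].
Proof.
move=> hf /and3P [h1 h2 /eqP h3].
have vm : fn f i.+1 < m.+2 by apply: fn_lt.
have im : i < m by lia.
split => //; last lia.
rewrite delfE // /delF sh_small // h3 /ush.
have -> : ((fn f i.+1).+1 < i.+1) = false by lia.
have -> : ((fn f i.+1).+1 < fn f i.+1) = false by lia.
lia.
Qed.

Lemma Pset_rec m t : (t.+1 * #|Pset m.+2 t.+1|).*2 = #|Pset m t| * m.
Proof.
set L := [set p : {ffun 'I_m.+2 -> 'I_m.+2} * 'I_m.+2 |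
            (fpf p.1 && (occf p.1 == t.+1)) && isocc m.+2 (fn p.1) p.2].
set R := [set p : {ffun 'I_m -> 'I_m} * 'I_m.+2 |
            (fpf p.1 && (occf p.1 == t)) && (p.2 < fn p.1 p.2)].
have cL : #|L| = t.+1 * #|Pset m.+2 t.+1|.
  rewrite /L (card_pairs (fun f : {ffun 'I_m.+2 -> 'I_m.+2} => fpf f && (occf f == t.+1))
     (fun f (i : 'I_m.+2) => isocc m.+2 (fn f) i)).
  rewrite (eq_bigr (fun _ => t.+1)); last first.
    move=> f /andP [_ /eqP <-]; by rewrite (card_set_sum _ (fun i => isocc m.+2 (fn f) i)).
  rewrite sum_nat_const mulnC; congr (_ * _); apply: eq_card => f; by rewrite !inE.
have cR : (#|R|).*2 = #|Pset m t| * m.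
  rewrite /R (card_pairs (fun f : {ffun 'I_m -> 'I_m} => fpf f && (occf f == t))
     (fun f (i : 'I_m.+2) => i < fn f i)).
  rewrite -muln2 big_distrl /=.
  rewrite (eq_bigr (fun _ => m)); last first.
    move=> g /andP [hg _]; rewrite (card_set_sum _ (fun i => i < fn g i)) muln2.
    rewrite (big_cat_nat (n := m) (leq0n m) (leqW (leqnSn m))) /= [X in _ + X]big1_seq ?addn0.
      by rewrite (openers hg).
    move=> a /andP [_]; rewrite mem_index_iota => /andP [h _]; by rewrite fn_out // ltnn.
  rewrite sum_nat_const.
  congr (_ * _); apply: eq_card => f; by rewrite !inE.
rewrite -cL -cR; congr (_.*2).
apply: (card_bij (f := fun p : {ffun 'I_m.+2 -> 'I_m.+2} * 'I_m.+2 => (delf (p.2 : nat).+1 p.1, p.2))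
                 (g := fun q : {ffun 'I_m -> 'I_m} * 'I_m.+2 => (insf (q.2 : nat).+1 (fn q.1 q.2).+1 q.1, q.2))).
- case=> f i; rewrite !inE /= => /andP [/andP [hf /eqP ho] hi].
  have [im h2 h3 h4] := del_key hf hi.
  have um : i.+1 < m.+2 by lia.
  have hg : fpf (delf i.+1 f) by apply: fpf_delf => //; lia.
  rewrite hg h3 h4 andbT /=.
  have := occ_insf hg im; rewrite h3 => /(_ h4).
  have -> : (fn f i.+1).-1.+1 = fn f i.+1 by lia.
  rewrite insf_delf // => e; apply/eqP; lia.
- case=> g a; rewrite !inE /= => /andP [/andP [hg /eqP ho] ha].
  have am : a < m.
    case: (ltnP a m) => // h; by rewrite fn_out // ltnn in ha.
  have vm : (fn g a).+1 < m.+2 by have := fn_lt g am; lia.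
  rewrite fpf_insf //= occ_insf // ho eqxx /=.
  exact: isocc_insf.
- case=> f i; rewrite !inE /= => /andP [/andP [hf /eqP ho] hi].
  have [im h2 h3 h4] := del_key hf hi.
  have um : i.+1 < m.+2 by lia.
  rewrite h3.
  have -> : (fn f i.+1).-1.+1 = fn f i.+1 by lia.
  by rewrite insf_delf.
- case=> g a; rewrite !inE /= => /andP [/andP [hg /eqP ho] ha].
  have am : a < m.
    case: (ltnP a m) => // h; by rewrite fn_out // ltnn in ha.
  have vm : (fn g a).+1 < m.+2 by have := fn_lt g am; lia.
  by rewrite delf_insf.
Qed.
Lemma P_closed N t : #|Pset (2 * N.+1) t| = 'C(N, t) * #|Pset (2 * (N.+1 - t)) 0|.
Proof.
elim: N t => [|N IH] [|s].
- by rewrite bin0 mul1n subn0.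
- have := Pset_rec 0 s; rewrite muln0 => /eqP; rewrite double_eq0 muln_eq0 /= => /eqP h.
  by rewrite h bin0n.
- by rewrite bin0 mul1n subn0.
- have e : 2 * N.+2 = (2 * N.+1).+2 by lia.
  have := Pset_rec (2 * N.+1) s; rewrite -e IH -muln2 => h.
  have e2 : N.+2 - s.+1 = N.+1 - s by lia.
  rewrite e2.
  apply/eqP; rewrite -(eqn_pmul2l (ltn0Sn s)); apply/eqP.
  have h' : s.+1 * #|Pset (2 * N.+2) s.+1| * 2 = 'C(N, s) * #|Pset (2 * (N.+1 - s)) 0| * (N.+1 * 2).
    rewrite h; ring.
  have : s.+1 * #|Pset (2 * N.+2) s.+1| = 'C(N, s) * #|Pset (2 * (N.+1 - s)) 0| * N.+1.
    apply/eqP; rewrite -(eqn_pmul2r (_ : 0 < 2)) //; apply/eqP; by rewrite h' mulnA.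
  move=> ->.
  have := mul_bin_diag N.+1 s; rewrite /= => hb.
  rewrite mulnA -hb; ring.
Qed.

Lemma Fset0 : #|Fset 0| = 1.
Proof.
have h : #|{ffun 'I_0 -> 'I_0}| = 1 by rewrite card_ffun card_ord.
rewrite -h; apply: eq_card => f; rewrite !inE /=; apply/forallP => -[i hi] //.
Qed.

Lemma Fset_dfact n : #|Fset (2 * n.+1)| = dfact (2 * n + 1).
Proof.
elim: n => [|n IH]; first by rewrite (_ : 2 * 1 = 0.+2) // Fset_rec Fset0.
have e : 2 * n.+2 = (2 * n.+1).+2 by lia.
rewrite e Fset_rec IH.
have e2 : 2 * n.+1 + 1 = (2 * n + 1).+2 by lia.
have e3 : dfact (2 * n + 1).+2 = (2 * n + 1).+2 * dfact (2 * n + 1) by [].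
rewrite e2 e3; congr (_ * _); lia.
Qed.

Lemma key k : dfact (2 * k + 1) = \sum_(j < k.+1) 'C(k, j) * #|Pset (2 * j.+1) 0|.
Proof.
rewrite -Fset_dfact Fset_sum.
rewrite (eq_bigr (fun t : 'I_(2 * k.+1).+1 => 'C(k, t) * #|Pset (2 * (k.+1 - t)) 0|)); last first.
  by move=> t _; exact: P_closed.
rewrite -(big_mkord xpredT (fun t => 'C(k, t) * #|Pset (2 * (k.+1 - t)) 0|)).
have hk : k.+1 <= (2 * k.+1).+1 by lia.
rewrite (big_cat_nat (n := k.+1) (leq0n _) hk) /=.
rewrite [X in _ + X]big1_seq ?addn0; last first.
  by move=> t /andP [_]; rewrite mem_index_iota => /andP [h _]; rewrite bin_small.
rewrite -(big_mkord xpredT (fun j => 'C(k, j) * #|Pset (2 * j.+1) 0|)).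
rewrite big_nat_rev /=; apply: eq_big_nat => j /andP [_ hj].
rewrite add0n.
have e1 : k.+1 - j.+1 = k - j by lia.
have e2 : k.+1 - (k - j) = j.+1 by lia.
by rewrite e1 e2 bin_sub.
Qed.
Section Transfer.
Variable n : nat.

Definition toF (M : {set Defs.arc n}) : {ffun 'I_(2 * n) -> 'I_(2 * n)} :=
  [ffun k => if [pick e in M | (e.1 == k) || (e.2 == k)] is Some e
             then (if e.1 == k then e.2 else e.1) else k].
Definition fromF (f : {ffun 'I_(2 * n) -> 'I_(2 * n)}) : {set Defs.arc n} :=
  [set e | (val e.1 < val e.2) && (f e.1 == e.2)].

Lemma matchingP (M : {set Defs.arc n}) : is_matching M ->
  (forall e, e \in M -> val e.1 < val e.2) /\
  (forall k, exists e0, [set e in M | (e.1 == k) || (e.2 == k)] = [set e0]).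
Proof.
move=> /andP [/forallP h1 /forallP h2]; split.
- move=> e he; exact: (implyP (h1 e)) he.
- move=> k; apply/cards1P; exact: h2 k.
Qed.

Lemma toF_of (M : {set Defs.arc n}) k e : is_matching M -> e \in M -> (e.1 == k) || (e.2 == k) ->
  toF M k = if e.1 == k then e.2 else e.1.
Proof.
move=> hM he hk. have [_ h2] := matchingP hM. have [e0 he0] := h2 k.
have ee0 : forall e', e' \in M -> (e'.1 == k) || (e'.2 == k) -> e' = e0.
  move=> e' h h'; have : e' \in [set e in M | (e.1 == k) || (e.2 == k)] by rewrite inE h h'.
  by rewrite he0 inE => /eqP.
rewrite /toF ffunE; case: pickP => [e' /andP [h h']|none].
  by rewrite (ee0 e' h h') (ee0 e he hk).
by move: (none e); rewrite he hk.
Qed.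

Lemma arc_ne (M : {set Defs.arc n}) e : is_matching M -> e \in M -> e.1 != e.2.
Proof.
move=> hM he; have [h1 _] := matchingP hM.
by rewrite -val_eqE neq_ltn (h1 e he).
Qed.

Lemma toF_fpf M : is_matching M -> fpf (toF M).
Proof.
move=> hM; have [h1 h2] := matchingP hM. apply/forallP => k.
have [e0 he0] := h2 k.
have : e0 \in [set e in M | (e.1 == k) || (e.2 == k)] by rewrite he0 set11.
rewrite inE => /andP [he hk].
have ne := arc_ne hM he.
have t1 : toF M e0.1 = e0.2 by rewrite (toF_of (e := e0)) ?eqxx.
have t2 : toF M e0.2 = e0.1 by rewrite (toF_of (e := e0)) ?eqxx ?orbT // (negbTE ne).
case/orP: hk => /eqP ek; rewrite -ek.
- by rewrite t1 t2 eqxx eq_sym ne.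
- by rewrite t2 t1 eqxx ne.
Qed.

Lemma fromF_toF M : is_matching M -> fromF (toF M) = M.
Proof.
move=> hM; have [h1 h2] := matchingP hM.
apply/setP => e; rewrite inE; apply/idP/idP.
- case/andP => lt /eqP fe.
  have [e0 he0] := h2 e.1.
  have : e0 \in [set e' in M | (e'.1 == e.1) || (e'.2 == e.1)] by rewrite he0 set11.
  rewrite inE => /andP [h0 hk].
  rewrite (toF_of hM h0 hk) in fe.
  move: fe; case: eqP => [ee|ne] fe.
    by rewrite [e]surjective_pairing -ee -fe -surjective_pairing.
  have e02 : e0.2 = e.1 by move: hk; rewrite (introF eqP ne) /= => /eqP.
  have := h1 e0 h0; rewrite fe e02 => h; have := ltn_trans lt h; by rewrite ltnn.
- move=> he; rewrite (h1 e he) /= (toF_of (e := e)) ?eqxx //.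
Qed.

Lemma fromF_match f : fpf f -> is_matching (fromF f).
Proof.
move=> /forallP hf; apply/andP; split.
  apply/forallP => e; apply/implyP; rewrite inE => /andP [] //.
apply/forallP => k; apply/cards1P.
have /andP [/eqP ffk fk] := hf k.
have fkv : val (f k) != val k by rewrite val_eqE.
exists (if val k < val (f k) then (k, f k) else (f k, k)).
apply/setP => -[a b]; rewrite !inE /=; apply/idP/idP.
- move=> /andP [/andP [ab /eqP fab] /orP [/eqP ak|/eqP bk]].
  + rewrite -ak fab ab; by rewrite !eqxx.
  + have fak : f k = a by rewrite -bk -fab; have /andP [/eqP -> _] := hf a.
    rewrite fak -bk (_ : (val b < val a) = false) ?eqxx //.
    apply/negbTE; rewrite -leqNgt; exact: ltnW.
- case: ifP => lt /eqP [-> ->].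
  + by rewrite lt !eqxx.
  + rewrite ffk !eqxx orbT andbT andbT.
    move: lt fkv; rewrite neq_ltn => lt2 /orP [//|h2]; exfalso; move: lt2; by rewrite h2.
Qed.

Lemma toF_fromF f : fpf f -> toF (fromF f) = f.
Proof.
move=> hf; have hM := fromF_match hf. move/forallP: (hf) => hf'.
apply/ffunP => k.
have /andP [/eqP ffk fk] := hf' k.
have fkv : val (f k) != val k by rewrite val_eqE.
case: (ltnP (val k) (val (f k))) => lt.
- have he : (k, f k) \in fromF f by rewrite inE /= lt eqxx.
  by rewrite (toF_of (e := (k, f k))) //= eqxx.
- have lt' : val (f k) < val k by rewrite ltn_neqAle fkv lt.
  have he : (f k, k) \in fromF f by rewrite inE /= lt' ffk eqxx.
  rewrite (toF_of (e := (f k, k))) //= ?eqxx ?orbT //.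
  by rewrite (negbTE fk).
Qed.

Lemma occ_pos (f : {ffun 'I_(2 * n) -> 'I_(2 * n)}) : (occf f != 0) = [exists i : 'I_(2 * n), isocc (2 * n) (fn f) i].
Proof.
rewrite /occf /occN -(card_set_sum (2 * n) (fun i => isocc (2 * n) (fn f) i)).
rewrite -lt0n card_gt0; apply/set0Pn/existsP => -[i hi]; exists i; move: hi; by rewrite inE.
Qed.

Lemma has21_fromF (f : {ffun 'I_(2 * n) -> 'I_(2 * n)}) : fpf f -> has_endhered21 (fromF f) = (occf f != 0).
Proof.
move=> hf; rewrite occ_pos; apply/existsP/existsP.
- move=> [x /andP [hx /existsP [y /andP [hy /andP [/eqP e1 /eqP e2]]]]].
  exists x.1; move: hx hy; rewrite !inE => /andP [lx /eqP fx] /andP [ly /eqP fy].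
  apply/and3P; split.
  + rewrite -e1; exact: ltn_ord.
  + by rewrite -e1 fnE fy.
  + by rewrite -e1 !fnE fx fy e2.
- move=> [i /and3P [h1 h2 /eqP h3]].
  set j := Ordinal h1.
  have fi : val (f i) = (val (f j)).+1 by move: h3; rewrite -[i.+1]/(nat_of_ord j) !fnE.
  have fj : i.+1 < val (f j) by move: h2; rewrite -[i.+1]/(nat_of_ord j) fnE.
  exists (i, f i); rewrite inE /= fi eqxx andbT; apply/andP; split; first lia.
  apply/existsP; exists (j, f j); rewrite inE /= eqxx fj /= eqxx /=.
  by rewrite ?fi eqxx.
Qed.
End Transfer.

Lemma a0_P k : a0 k = #|Pset (2 * k) 0|.
Proof.
rewrite /a0; apply: (card_bij (f := @toF k) (g := @fromF k)).
- move=> M; rewrite !inE => /andP [hM h21].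
  have hf := toF_fpf hM. rewrite hf /=.
  move: h21; by rewrite -{1}(fromF_toF hM) has21_fromF // negbK.
- move=> f; rewrite !inE => /andP [hf /eqP ho].
  by rewrite fromF_match //= has21_fromF // ho.
- move=> M; rewrite inE => /andP [hM _]; exact: fromF_toF.
- move=> f; rewrite inE => /andP [hf _]; exact: toF_fromF.
Qed.
Lemma binC n l j : l + j <= n -> 'C(n, l + j) * 'C(l + j, j) = 'C(n, j) * 'C(n - j, l).
Proof.
move=> h.
have h1 := bin_fact (leq_addl l j). have h2 := bin_fact h.
have hj : j <= n by lia. have h3 := bin_fact hj.
have hl : l <= n - j by lia. have h4 := bin_fact hl.
have e0 : l + j - j = l by lia. rewrite e0 in h1.
have e : n - j - l = n - (l + j) by lia. rewrite e in h4.
apply/eqP; rewrite -(eqn_pmul2r (_ : 0 < j`! * l`! * (n - (l + j))`!)); last by rewrite !muln_gt0 !fact_gt0.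
apply/eqP.
transitivity ('C(n, l + j) * ('C(l + j, j) * (j`! * l`!)) * (n - (l + j))`!); first ring.
rewrite h1 -mulnA h2.
transitivity ('C(n, j) * j`! * ('C(n - j, l) * (l`! * (n - (l + j))`!))); last ring.
rewrite h4 -mulnA h3 //.
Qed.

Local Open Scope ring_scope.
Import GRing.Theory.

Lemma alt_binom (m : nat) :
  \sum_(0 <= i < m.+1) (-1) ^+ (m - i) * ('C(m, i))%:Z = (m == 0%N)%:Z.
Proof.
have := exprDn (-1 : int) 1 m.
rewrite addNr expr0n => e.
rewrite big_mkord.
transitivity (\sum_(i < m.+1) (-1 : int) ^+ (m - i) * 1 ^+ i *+ 'C(m, i)).
  apply: eq_bigr => i _; by rewrite expr1n mulr1 pmulrn mulrzz mulrC.
rewrite -e; by case: (m == 0)%N.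
Qed.

Lemma core_sum (n j : nat) : (j <= n)%N ->
  \sum_(0 <= k < n.+1) (-1) ^+ (n - k) * (('C(n, k) * 'C(k, j))%N)%:Z = (j == n)%:Z.
Proof.
move=> jn.
rewrite (big_cat_nat (n := j) (leq0n j) (leqW jn)) /=.
rewrite big1_seq ?add0r; last first.
  move=> k /andP [_]; rewrite mem_index_iota => /andP [_ kj].
  by rewrite (bin_small kj) muln0 mulr0.
rewrite -{1}(add0n j) big_addn.
have -> : (n.+1 - j = (n - j).+1)%N by lia.
transitivity (('C(n, j))%:Z * \sum_(0 <= l < (n - j).+1) (-1) ^+ (n - j - l) * ('C(n - j, l))%:Z).
  rewrite big_distrr /=; apply: eq_big_nat => l /andP [_ hl].
  rewrite binC; last lia.
  have -> : (n - (l + j) = n - j - l)%N by lia.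
  by rewrite PoszM mulrCA.
rewrite alt_binom.
case: (eqVneq j n) => [->|ne]; first by rewrite subnn binn eqxx mulr1.
have -> : (n - j == 0)%N = false by apply/negbTE; rewrite subn_eq0 -ltnNge ltn_neqAle ne.
by rewrite mulr0.
Qed.

Lemma inversion (b : nat -> int) n :
  \sum_(k < n.+1) (-1) ^+ (n - k) * ('C(n, k))%:Z * (\sum_(j < k.+1) ('C(k, j))%:Z * b j) = b n.
Proof.
rewrite -(big_mkord xpredT (fun k => (-1) ^+ (n - k) * ('C(n, k))%:Z * (\sum_(j < k.+1) ('C(k, j))%:Z * b j))).
transitivity (\sum_(0 <= k < n.+1) \sum_(0 <= j < n.+1) (-1) ^+ (n - k) * ('C(n, k))%:Z * (('C(k, j))%:Z * b j)).
  apply: eq_big_nat => k /andP [_ hk].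
  rewrite -(big_mkord xpredT (fun j => ('C(k, j))%:Z * b j)) big_distrr /=.
  rewrite [RHS](big_cat_nat (n := k.+1) (leq0n _) hk) /=.
  rewrite [X in _ = _ + X]big1_seq ?addr0 //.
  move=> j /andP [_]; rewrite mem_index_iota => /andP [kj _].
  by rewrite (bin_small kj) mul0r mulr0.
rewrite exchange_big_nat /=.
transitivity (\sum_(0 <= j < n.+1) (j == n)%:Z * b j).
  apply: eq_big_nat => j /andP [_ hj].
  rewrite -core_sum // big_distrl /=; apply: eq_bigr => k _.
  by rewrite PoszM; ring.
rewrite big_nat_recr //= eqxx mul1r big1_seq ?add0r //.
move=> j /andP [_]; rewrite mem_index_iota => /andP [_ hj].
by rewrite (_ : (j == n) = false) ?mul0r //; apply/negbTE; rewrite neq_ltn hj.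
Qed.

Unset Implicit Arguments.

Theorem lemma3 (n : nat) :
  (a0 n.+1)%:Z =
  \sum_(k < n.+1) (-1) ^+ (n - k) * ('C(n, k))%:Z * (dfact (2 * k + 1))%:Z.
Proof.
have hk : forall k : nat, (dfact (2 * k + 1))%:Z = \sum_(j < k.+1) ('C(k, j))%:Z * (a0 j.+1)%:Z.
  move=> k; rewrite key -natz natr_sum; apply: eq_bigr => j _; by rewrite a0_P natrM !natz.
rewrite (eq_bigr (fun k : 'I_n.+1 => (-1) ^+ (n - k) * ('C(n, k))%:Z *
   (\sum_(j < k.+1) ('C(k, j))%:Z * (a0 j.+1)%:Z))); last by move=> k _; rewrite hk.
by rewrite (inversion (fun j => (a0 j.+1)%:Z)).
Qed.
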